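(* Let $q\ge2$ and let $f\colon\mathbb{N}_0\to\mathbb{U}$ be strongly $q$-multiplicative. Then either there exists an integer $0\le p<q-1$ such that $f(n)=e(np/(q-1))$ for all $n\in\mathbb{N}_0$, or $f$ is of Gelfond type of order $1$, i.e. there exists $\gamma<1$ such that $$\sup_{\alpha\in\mathbb{R}}\Big|\sum_{n=0}^{N-1}f(n)e(\alpha n)\Big|\ll N^{\gamma}\qquad(N\ge1).$$
   Context: $\mathbb{N}_0=\{0,1,\dots\}$, $\mathbb{U}=\{z\in\mathbb{C}:|z|=1\}$, $e(t)=e^{2\pi i t}$. $f$ is $q$-multiplicative if $f(m+n)=f(m)f(n)$ whenever $t,m,n\ge0$, $m<q^t$, $q^t\mid n$; it is strongly $q$-multiplicative if moreover $f(qn)=f(n)$ for all $n\in\mathbb{N}_0$. $X\ll Y$ means $|X|\le CY$ with $C$ independent of $N$. *)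

(* Defs.v *)
From Stdlib Require Import Reals Lra Lia.
From Coquelicot Require Import Coquelicot.
Open Scope R_scope.

Definition e (t : R) : C := (cos (2 * PI * t), sin (2 * PI * t)).

Definition unimodular (f : nat -> C) : Prop := forall n, Cmod (f n) = 1.

Definition q_multiplicative (q : nat) (f : nat -> C) : Prop :=
  forall t m n : nat, (m < q ^ t)%nat -> Nat.divide (q ^ t) n ->
    f (m + n)%nat = Cmult (f m) (f n).

Definition strongly_q_multiplicative (q : nat) (f : nat -> C) : Prop :=
  q_multiplicative q f /\ forall n : nat, f (q * n)%nat = f n.

Fixpoint csum (g : nat -> C) (N : nat) : C :=
  match N with
  | O => (0, 0)
  | S k => Cplus (csum g k) (g k)
  end.

(* Main.v *)
Require Import Defs.
From Stdlib Require Import Reals Lra Lia.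
From Coquelicot Require Import Coquelicot.
From Stdlib Require Import ZArith Classical.
Open Scope R_scope.

Ltac ceq := apply injective_projections; unfold Cplus, Cmult; simpl; ring.

Lemma e_add a b : e (a + b) = Cmult (e a) (e b).
Proof.
  unfold e, Cmult; simpl. rewrite Rmult_plus_distr_l, cos_plus, sin_plus.
  f_equal; ring.
Qed.

Lemma e_0 : e 0 = (1, 0).
Proof. unfold e. rewrite Rmult_0_r, cos_0, sin_0. reflexivity. Qed.

Lemma Cmod_e t : Cmod (e t) = 1.
Proof.
  unfold Cmod, e; simpl.
  pose proof (sin2_cos2 (2 * PI * t)) as H. unfold Rsqr in H.
  replace (cos (2 * PI * t) * (cos (2 * PI * t) * 1) +
    sin (2 * PI * t) * (sin (2 * PI * t) * 1)) with 1 by lra.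
  apply sqrt_1.
Qed.

Lemma sin_IZR_PI z : sin (IZR z * PI) = 0.
Proof. apply sin_eq_0_1. exists z. reflexivity. Qed.

Lemma e_int z : e (IZR z) = (1, 0).
Proof.
  unfold e.
  replace (2 * PI * IZR z) with (2 * (IZR z * PI)) by ring.
  rewrite cos_2a_sin, sin_2a, sin_IZR_PI. f_equal; ring.
Qed.

Lemma e_per x z : e (x + IZR z) = e x.
Proof.
  rewrite e_add, e_int. destruct (e x) as [a b]. ceq.
Qed.

Lemma e_one t : e t = (1, 0) -> exists k, t = IZR k.
Proof.
  intro H. unfold e in H. injection H as H1 H2.
  replace (2 * PI * t) with (2 * (PI * t)) in H1 by ring.
  rewrite cos_2a_sin in H1.
  assert (Hs : sin (PI * t) = 0) by nra.
  destruct (sin_eq_0_0 _ Hs) as [k Hk]. exists k.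
  pose proof PI_RGT_0. 
  apply (Rmult_eq_reg_l PI); [|lra]. rewrite Hk. ring.
Qed.

Lemma e_inv z x : Cmult z (e x) = (1, 0) -> z = e (- x).
Proof.
  intro H.
  assert (z = Cmult (Cmult z (e x)) (e (- x))).
  { rewrite <- Cmult_assoc, <- e_add, Rplus_opp_r, e_0. destruct z; ceq. }
  rewrite H0, H. destruct (e (-x)); ceq.
Qed.

Lemma csum_ext g h n : (forall j, (j < n)%nat -> g j = h j) -> csum g n = csum h n.
Proof.
  induction n; intros H; simpl; auto.
  rewrite IHn, H; auto.
Qed.

Lemma csum_add g a b : csum g (a + b) = Cplus (csum g a) (csum (fun j => g (a + j)%nat) b).
Proof.
  induction b; simpl.
  - rewrite Nat.add_0_r. destruct (csum g a); ceq.
  - rewrite Nat.add_succ_r. simpl. rewrite IHb.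
    destruct (csum g a), (csum (fun j => g (a + j)%nat) b), (g (a + b)%nat). ceq.
Qed.

Lemma csum_scal g c n : csum (fun j => Cmult (g j) c) n = Cmult (csum g n) c.
Proof.
  induction n; simpl.
  - destruct c; ceq.
  - rewrite IHn. destruct (csum g n), (g n), c. ceq.
Qed.

Lemma csum_shift g n : csum g (S n) = Cplus (g 0%nat) (csum (fun j => g (S j)) n).
Proof.
  induction n.
  - simpl. destruct (g 0%nat); ceq.
  - change (csum g (S (S n))) with (Cplus (csum g (S n)) (g (S n))).
    rewrite IHn. simpl. destruct (g 0%nat), (csum (fun j => g (S j)) n), (g (S n)). ceq.
Qed.

Lemma Cmod_00 : Cmod (0, 0) = 0.
Proof. unfold Cmod; simpl. replace (0 * (0 * 1) + 0 * (0 * 1)) with 0 by ring. apply sqrt_0. Qed.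

Lemma csum_bound g n : (forall j, (j < n)%nat -> Cmod (g j) <= 1) -> Cmod (csum g n) <= INR n.
Proof.
  induction n; intros H; simpl.
  - rewrite Cmod_00. lra.
  - eapply Rle_trans. apply Cmod_triangle.
    assert (Cmod (g n) <= 1) by auto.
    assert (Cmod (csum g n) <= INR n) by auto. destruct n; simpl in *; lra.
Qed.

Lemma csum_pair u d n : (1 <= d)%nat -> (d < n)%nat ->
  (forall j, (j < n)%nat -> Cmod (u j) <= 1) ->
  Cmod (csum u n) <= Cmod (Cplus (u 0%nat) (u d)) + INR n - 2.
Proof.
  intros Hd Hn Hu.
  induction n.
  - lia.
  - destruct (Nat.eq_dec d n) as [->|Hne].
    + destruct n as [|d']; [lia|].
      change (csum u (S (S d'))) with (Cplus (csum u (S d')) (u (S d'))).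
      rewrite csum_shift.
      replace (Cplus (Cplus (u 0%nat) (csum (fun j => u (S j)) d')) (u (S d')))
        with (Cplus (Cplus (u 0%nat) (u (S d'))) (csum (fun j => u (S j)) d'))
        by (destruct (u 0%nat), (u (S d')), (csum (fun j => u (S j)) d'); ceq).
      eapply Rle_trans. apply Cmod_triangle.
      assert (Cmod (csum (fun j => u (S j)) d') <= INR d').
      { apply csum_bound. intros. apply Hu. lia. }
      rewrite !S_INR. lra.
    + change (csum u (S n)) with (Cplus (csum u n) (u n)). rewrite S_INR. eapply Rle_trans. apply Cmod_triangle.
      assert (Cmod (u n) <= 1) by (apply Hu; lia).
      assert (Cmod (csum u n) <= Cmod (Cplus (u 0%nat) (u d)) + INR n - 2).
      { apply IHn; [lia|]. intros; apply Hu; lia. }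
      lra.
Qed.

Definition Ssum (f : nat -> C) (a : R) (N : nat) : C :=
  csum (fun n => Cmult (f n) (e (a * INR n))) N.

Lemma term_bound f a : unimodular f -> forall n, Cmod (Cmult (f n) (e (a * INR n))) <= 1.
Proof. intros Hu n. rewrite Cmod_mult, Cmod_e, Hu. lra. Qed.

Lemma Ssum_bound f a N : unimodular f -> Cmod (Ssum f a N) <= INR N.
Proof. intros Hu. apply csum_bound. intros; apply term_bound; auto. Qed.

Lemma f_zero q f : unimodular f -> strongly_q_multiplicative q f -> f 0%nat = (1, 0).
Proof.
  intros Hu [Hm _].
  assert (H := Hm 0%nat 0%nat 0%nat ltac:(simpl; lia) (Nat.divide_0_r _)).
  simpl in H. pose proof (Hu 0%nat) as H1. unfold Cmod in H1.
  destruct (f 0%nat) as [a b]. unfold Cmult in H; simpl in *.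
  injection H as Ha Hb.
  assert (a * a + b * b = 1).
  { assert (H2 := sqrt_sqrt (a*(a*1)+b*(b*1)) ltac:(nra)). rewrite H1 in H2. lra. }
  assert (Hz : b * (1 - 2 * a) = 0) by nra.
  destruct (Rmult_integral _ _ Hz) as [Hb0|Ha2].
  - subst. f_equal. nra.
  - nra.
Qed.

Lemma digit q f d m : strongly_q_multiplicative q f -> (d < q)%nat ->
  f (d + q * m)%nat = Cmult (f d) (f m).
Proof.
  intros [Hm Hs] Hd.
  rewrite Hm with (t := 1%nat).
  - rewrite Hs. reflexivity.
  - rewrite Nat.pow_1_r. auto.
  - rewrite Nat.pow_1_r. exists m. ring.
Qed.

Lemma Ssum_mul q f a N : strongly_q_multiplicative q f ->
  Ssum f a (q * N) = Cmult (Ssum f a q) (Ssum f (INR q * a) N).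
Proof.
  intros Hf. induction N.
  - rewrite Nat.mul_0_r. unfold Ssum; simpl. destruct (csum _ q); ceq.
  - replace (q * S N)%nat with (q * N + q)%nat by ring.
    unfold Ssum in *. rewrite csum_add, IHN.
    rewrite (csum_ext (fun j => Cmult (f (q * N + j)%nat) (e (a * INR (q * N + j)))) (fun j => Cmult (Cmult (f j) (e (a * INR j)))
                 (Cmult (f N) (e (INR q * a * INR N)))) q).
    + rewrite csum_scal. simpl.
      destruct (csum (fun n => Cmult (f n) (e (a * INR n))) q),
        (csum (fun n => Cmult (f n) (e (INR q * a * INR n))) N),
        (f N), (e (INR q * a * INR N)). ceq.
    + intros j Hj. replace (q * N + j)%nat with (j + q * N)%nat by ring.
      rewrite digit with (q := q); auto.
      replace (a * INR (j + q * N)) with (a * INR j + INR q * a * INR N)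
        by (rewrite plus_INR, mult_INR; ring).
      rewrite e_add.
      destruct (f j), (f N), (e (a * INR j)), (e (INR q * a * INR N)). ceq.
Qed.

Lemma Ssum_step q f a N : (1 <= q)%nat -> unimodular f -> strongly_q_multiplicative q f ->
  Cmod (Ssum f a N) <= Cmod (Ssum f a q) * Cmod (Ssum f (INR q * a) (N / q)) + INR q.
Proof.
  intros Hq Hu Hf.
  rewrite (Nat.div_mod N q) at 1 by lia.
  unfold Ssum at 1. rewrite csum_add. fold (Ssum f a (q * (N / q))).
  rewrite Ssum_mul by auto.
  eapply Rle_trans. apply Cmod_triangle. rewrite Cmod_mult.
  apply Rplus_le_compat_l.
  eapply Rle_trans. apply csum_bound. intros; apply term_bound; auto.
  apply le_INR. pose proof (Nat.mod_upper_bound N q). lia.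
Qed.

Lemma Cmod_sq z : Cmod z * Cmod z = fst z ^ 2 + snd z ^ 2.
Proof. unfold Cmod. apply sqrt_sqrt. destruct z; simpl; nra. Qed.

Lemma unit_all (u : nat -> C) n d : (1 <= d)%nat -> (d < n)%nat ->
  (forall j, (j < n)%nat -> Cmod (u j) = 1) -> u 0%nat = (1, 0) ->
  INR n <= Cmod (csum u n) -> u d = (1, 0).
Proof.
  intros Hd Hn Hu H0 Hge.
  assert (H := csum_pair u d n Hd Hn ltac:(intros; rewrite Hu; auto; lra)).
  assert (H2 : 2 <= Cmod (Cplus (u 0%nat) (u d))) by lra.
  rewrite H0 in H2. pose proof (Hu d Hn) as H1.
  pose proof (Cmod_sq (u d)) as S1. pose proof (Cmod_sq (Cplus (1,0) (u d))) as S2.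
  pose proof (Cmod_ge_0 (Cplus (1,0) (u d))).
  destruct (u d) as [x y]. simpl in *. rewrite H1 in S1.
  assert (x = 1) by nra. subst. f_equal. nra.
Qed.

Definition first_form (q : nat) (f : nat -> C) : Prop :=
  exists p : nat, (p < q - 1)%nat /\
     forall n : nat, f n = e (INR n * INR p / INR (q - 1)).

Lemma digits_determine q f c : (2 <= q)%nat -> strongly_q_multiplicative q f ->
  (forall d, (d < q)%nat -> f d = e (INR d * c)) ->
  (forall m, e (INR (q * m) * c) = e (INR m * c)) ->
  forall n, f n = e (INR n * c).
Proof.
  intros Hq Hf Hd Hm n.
  induction n as [n IH] using (well_founded_induction lt_wf).
  destruct (Nat.eq_dec n 0) as [->|Hn0].
  - apply Hd. lia.
  - rewrite (Nat.div_mod n q) by lia.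
    rewrite Nat.add_comm, digit with (q := q); auto;
      [| apply Nat.mod_upper_bound; lia].
    rewrite Hd by (apply Nat.mod_upper_bound; lia).
    rewrite IH by (apply Nat.div_lt; lia).
    rewrite <- (Hm (n / q)%nat), <- e_add. f_equal.
    rewrite !plus_INR. ring.
Qed.

Lemma degenerate q f b : (2 <= q)%nat -> unimodular f -> strongly_q_multiplicative q f ->
  INR q <= Cmod (Ssum f b q) -> INR q <= Cmod (Ssum f (INR q * b) q) -> first_form q f.
Proof.
  intros Hq Hu Hf H1 H2.
  pose proof (f_zero q f Hu Hf) as Hf0.
  assert (HQ : INR (q - 1) = INR q - 1) by (rewrite minus_INR by lia; simpl; ring).
  assert (HQ2 : 2 <= INR q) by (apply (le_INR 2); lia).
  assert (Hall : forall a d, (1 <= d)%nat -> (d < q)%nat -> INR q <= Cmod (Ssum f a q) ->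
             f d = e (- (a * INR d))).
  { intros a d Hd1 Hdq Ha. apply e_inv.
    apply (unit_all (fun n => Cmult (f n) (e (a * INR n))) q d); auto.
    - intros; rewrite Cmod_mult, Cmod_e, Hu; ring.
    - simpl. rewrite Rmult_0_r, e_0, Hf0. ceq. }
  assert (Hk : exists k, (INR q - 1) * b = IZR k).
  { apply e_one.
    replace ((INR q - 1) * b) with (INR q * b * INR 1 + - (b * INR 1)) by (simpl; ring).
    rewrite e_add, <- (Hall b 1%nat), (Hall (INR q * b) 1%nat), <- e_add, Rplus_opp_r, e_0;
      auto; lia. }
  destruct Hk as [k Hk].
  set (m := Z.of_nat (q - 1)).
  assert (Hm0 : (0 < m)%Z) by (unfold m; lia).
  set (r := ((- k) mod m)%Z).
  set (w := ((- k) / m)%Z).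
  assert (Hr : (0 <= r < m)%Z) by (apply Z.mod_pos_bound; auto).
  assert (Hrw : r = (- k - m * w)%Z) by (apply Z.mod_eq; lia).
  exists (Z.to_nat r). split; [unfold m in Hr; lia|].
  assert (HIm : IZR m = INR q - 1) by (unfold m; rewrite <- INR_IZR_INZ; auto).
  assert (HIp : INR (Z.to_nat r) = IZR r) by (rewrite INR_IZR_INZ, Z2Nat.id; [reflexivity| destruct Hr; assumption]).
  clearbody r w.
  set (c := INR (Z.to_nat r) / INR (q - 1)).
  intros n.
  replace (INR n * INR (Z.to_nat r) / INR (q - 1)) with (INR n * c) by (unfold c, Rdiv; ring).
  apply (digits_determine q f c Hq Hf).
  - intros d Hd. destruct (Nat.eq_dec d 0) as [->|Hd0].
    + rewrite Hf0. simpl. rewrite Rmult_0_l, e_0. auto.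
    + rewrite (Hall b d) by (auto; lia).
      replace (INR d * c) with (- (b * INR d) + IZR (- (Z.of_nat d * w))).
      { rewrite e_per. auto. }
      unfold c. rewrite HIp, HQ, Hrw, opp_IZR, mult_IZR, minus_IZR, mult_IZR, opp_IZR, HIm.
      rewrite <- INR_IZR_INZ, <- Hk. field. lra.
  - intros j.
    replace (INR (q * j) * c) with (INR j * c + IZR (Z.of_nat (j * Z.to_nat r))).
    { rewrite e_per. auto. }
    rewrite <- INR_IZR_INZ, !mult_INR. unfold c. rewrite HQ. field. lra.
Qed.

Lemma cont_cos c x : continuity_pt (fun b => cos (2 * PI * (b * c))) x.
Proof.
  apply (continuity_pt_comp (fun b => 2 * PI * (b * c)) cos); [reg | apply continuity_cos].
Qed.

Lemma cont_sin c x : continuity_pt (fun b => sin (2 * PI * (b * c))) x.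
Proof.
  apply (continuity_pt_comp (fun b => 2 * PI * (b * c)) sin); [reg | apply continuity_sin].
Qed.

Lemma Ssum_cont f N x : continuity_pt (fun b => fst (Ssum f b N)) x /\
                        continuity_pt (fun b => snd (Ssum f b N)) x.
Proof.
  induction N.
  - split; apply continuity_pt_const; intros u v; reflexivity.
  - destruct IHN as [H1 H2].
    change (fun b => fst (Ssum f b (S N))) with
      (fun b => fst (Ssum f b N) + (fst (f N) * cos (2 * PI * (b * INR N)) - snd (f N) * sin (2 * PI * (b * INR N)))).
    change (fun b => snd (Ssum f b (S N))) with
      (fun b => snd (Ssum f b N) + (fst (f N) * sin (2 * PI * (b * INR N)) + snd (f N) * cos (2 * PI * (b * INR N)))).
    split.
    + apply (continuity_pt_plus (fun b => fst (Ssum f b N))); auto.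
      apply continuity_pt_minus.
      * apply (continuity_pt_scal (fun b => cos (2 * PI * (b * INR N)))), cont_cos.
      * apply (continuity_pt_scal (fun b => sin (2 * PI * (b * INR N)))), cont_sin.
    + apply (continuity_pt_plus (fun b => snd (Ssum f b N))); auto.
      apply continuity_pt_plus.
      * apply (continuity_pt_scal (fun b => sin (2 * PI * (b * INR N)))), cont_sin.
      * apply (continuity_pt_scal (fun b => cos (2 * PI * (b * INR N)))), cont_cos.
Qed.

Definition n2 (z : C) := fst z ^ 2 + snd z ^ 2.
Definition Gf f q b := n2 (Ssum f b q) * n2 (Ssum f (INR q * b) q).

Lemma Gf_cont f q x : continuity_pt (Gf f q) x.
Proof.
  assert (Hs : forall x, continuity_pt (fun b => fst (Ssum f (INR q * b) q)) x /\
                         continuity_pt (fun b => snd (Ssum f (INR q * b) q)) x).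
  { intros y. split.
    - apply (continuity_pt_comp (fun b => INR q * b) (fun b => fst (Ssum f b q))); [reg|].
      apply Ssum_cont.
    - apply (continuity_pt_comp (fun b => INR q * b) (fun b => snd (Ssum f b q))); [reg|].
      apply Ssum_cont. }
  destruct (Hs x) as [H1 H2]. destruct (Ssum_cont f q x) as [H3 H4].
  unfold Gf, n2. simpl.
  apply continuity_pt_mult; apply continuity_pt_plus; apply continuity_pt_mult; auto;
    apply continuity_pt_mult; auto; apply continuity_pt_const; intros u v; reflexivity.
Qed.

Lemma Ssum_per f b z N : Ssum f (b + IZR z) N = Ssum f b N.
Proof.
  unfold Ssum. apply csum_ext. intros j _.
  replace ((b + IZR z) * INR j) with (b * INR j + IZR (z * Z.of_nat j))
    by (rewrite mult_IZR, <- INR_IZR_INZ; ring).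
  rewrite e_per. auto.
Qed.

Lemma Gf_per f q b z : Gf f q (b + IZR z) = Gf f q b.
Proof.
  unfold Gf. rewrite Ssum_per.
  replace (INR q * (b + IZR z)) with (INR q * b + IZR (Z.of_nat q * z))
    by (rewrite mult_IZR, <- INR_IZR_INZ; ring).
  rewrite Ssum_per. auto.
Qed.

Lemma F_bound f q a : unimodular f -> Cmod (Ssum f a q) <= INR q.
Proof. apply Ssum_bound. Qed.

Lemma Gmax q f : (2 <= q)%nat -> unimodular f -> strongly_q_multiplicative q f ->
  ~ first_form q f ->
  exists M, M < INR q * INR q /\
    forall b, Cmod (Ssum f b q) * Cmod (Ssum f (INR q * b) q) <= M.
Proof.
  intros Hq Hu Hf Hnot.
  destruct (continuity_ab_maj (Gf f q) 0 1 ltac:(lra) (fun c _ => Gf_cont f q c))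
    as [Mx [HM HMx]].
  assert (HQ2 : 2 <= INR q) by (apply (le_INR 2); lia).
  assert (Hsq : forall a, Cmod (Ssum f a q) * Cmod (Ssum f a q) = n2 (Ssum f a q))
    by (intros; apply Cmod_sq).
  assert (Hle : forall a, 0 <= Cmod (Ssum f a q) <= INR q)
    by (intros; split; [apply Cmod_ge_0 | apply F_bound; auto]).
  assert (Hlt : Gf f q Mx < INR q * INR q * (INR q * INR q)).
  { destruct (Rlt_or_le (Gf f q Mx) (INR q * INR q * (INR q * INR q))) as [h|h]; auto.
    exfalso. apply Hnot. apply (degenerate q f Mx); auto.
    - unfold Gf in h. rewrite <- !Hsq in h.
      destruct (Hle Mx) as [a1 a2]. destruct (Hle (INR q * Mx)) as [b1 b2].
      set (X := Cmod (Ssum f Mx q)) in *. set (Y := Cmod (Ssum f (INR q * Mx) q)) in *.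
      assert (Y * Y <= INR q * INR q) by nra.
      assert (INR q * INR q <= X * X) by nra. nra.
    - unfold Gf in h. rewrite <- !Hsq in h.
      destruct (Hle Mx) as [a1 a2]. destruct (Hle (INR q * Mx)) as [b1 b2].
      set (X := Cmod (Ssum f Mx q)) in *. set (Y := Cmod (Ssum f (INR q * Mx) q)) in *.
      assert (X * X <= INR q * INR q) by nra.
      assert (INR q * INR q <= Y * Y) by nra. nra. }
  assert (HG0 : 0 <= Gf f q Mx).
  { unfold Gf. rewrite <- !Hsq. pose proof (Hle Mx). pose proof (Hle (INR q * Mx)).
    apply Rmult_le_pos; apply Rmult_le_pos; lra. }
  exists (sqrt (Gf f q Mx)). split.
  - rewrite <- (sqrt_square (INR q * INR q)) by nra.
    apply sqrt_lt_1_alt. split; [exact HG0| exact Hlt].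
  - intros b.
    pose proof (Hle b). pose proof (Hle (INR q * b)).
    rewrite <- (sqrt_square (Cmod (Ssum f b q) * Cmod (Ssum f (INR q * b) q))) by (apply Rmult_le_pos; lra). apply sqrt_le_1_alt.
    destruct (base_Int_part b) as [h1 h2].
    specialize (HM (b - IZR (Int_part b)) ltac:(lra)).
    rewrite <- (Gf_per f q (b - IZR (Int_part b)) (Int_part b)) in HM.
    replace (b - IZR (Int_part b) + IZR (Int_part b)) with b in HM by ring.
    unfold Gf in HM. rewrite <- !Hsq in HM.
    replace (Cmod (Ssum f b q) * Cmod (Ssum f (INR q * b) q) *
             (Cmod (Ssum f b q) * Cmod (Ssum f (INR q * b) q))) with
      (Cmod (Ssum f b q) * Cmod (Ssum f b q) *
       (Cmod (Ssum f (INR q * b) q) * Cmod (Ssum f (INR q * b) q))) by ring.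
    unfold Gf; rewrite <- !Hsq; apply HM.
Qed.

Lemma two_step q f M a N : (2 <= q)%nat -> unimodular f -> strongly_q_multiplicative q f ->
  (forall b, Cmod (Ssum f b q) * Cmod (Ssum f (INR q * b) q) <= M) ->
  Cmod (Ssum f a N) <= M * Cmod (Ssum f (INR q * (INR q * a)) (N / q / q))
                        + INR q * INR q + INR q.
Proof.
  intros Hq Hu Hf HM.
  assert (H1 := Ssum_step q f a N ltac:(lia) Hu Hf).
  assert (H2 := Ssum_step q f (INR q * a) (N / q) ltac:(lia) Hu Hf).
  assert (H3 := HM a).
  assert (H4 : 0 <= Cmod (Ssum f a q) <= INR q) by (split; [apply Cmod_ge_0|apply F_bound; auto]).
  assert (H5 := Cmod_ge_0 (Ssum f (INR q * a) q)).
  assert (H6 := Cmod_ge_0 (Ssum f (INR q * (INR q * a)) (N / q / q))).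
  set (F1 := Cmod (Ssum f a q)) in *.
  set (F2 := Cmod (Ssum f (INR q * a) q)) in *.
  set (Z := Cmod (Ssum f (INR q * (INR q * a)) (N / q / q))) in *.
  set (Y := Cmod (Ssum f (INR q * a) (N / q))) in *.
  assert (F1 * Y <= F1 * (F2 * Z + INR q)) by (apply Rmult_le_compat_l; lra).
  assert (F1 * F2 * Z <= M * Z) by (apply Rmult_le_compat_r; lra).
  assert (F1 * INR q <= INR q * INR q) by (apply Rmult_le_compat_r; [apply pos_INR|lra]).
  nra.
Qed.

Theorem proposition6p1 (q : nat) (f : nat -> C) :
  (2 <= q)%nat ->
  unimodular f ->
  strongly_q_multiplicative q f ->
  (exists p : nat, (p < q - 1)%nat /\
     forall n : nat, f n = e (INR n * INR p / INR (q - 1)))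
  \/
  (exists gamma : R, gamma < 1 /\
     exists K : R, forall (N : nat), (1 <= N)%nat -> forall alpha : R,
       Cmod (csum (fun n => Cmult (f n) (e (alpha * INR n))) N)
         <= K * Rpower (INR N) gamma).
Proof.
  intros Hq Hu Hf.
  destruct (classic (first_form q f)) as [Hff|Hnot]; [left; exact Hff|right].
  destruct (Gmax q f Hq Hu Hf Hnot) as [M [HMlt HM]].
  assert (HQ2 : 2 <= INR q) by (apply (le_INR 2); lia).
  set (Q := INR q) in *.
  set (M' := Rmax M 2).
  assert (HM'1 : M <= M') by apply Rmax_l.
  assert (HM'2 : 2 <= M') by apply Rmax_r.
  assert (HM'3 : M' < Q * Q) by (apply Rmax_lub_lt; nra).
  assert (HlnQ : 0 < ln (Q * Q)) by (rewrite <- ln_1; apply ln_increasing; nra).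
  assert (HlnM : 0 < ln M') by (rewrite <- ln_1; apply ln_increasing; lra).
  assert (HlnMQ : ln M' < ln (Q * Q)) by (apply ln_increasing; lra).
  set (g := ln M' / ln (Q * Q)).
  assert (Hg : g * ln (Q * Q) = ln M') by (unfold g; field; lra).
  assert (Hg0 : 0 <= g) by nra.
  assert (Hg1 : g < 1) by nra.
  assert (HRQ : Rpower (Q * Q) g = M') by (unfold Rpower; rewrite Hg; apply exp_ln; lra).
  set (c := Q * Q + Q).
  set (D := c / (M' - 1)).
  assert (HD0 : 0 <= D) by (unfold D, c; apply Rlt_le, Rdiv_lt_0_compat; nra).
  assert (HD : M' * D - c = D) by (unfold D; field; lra).
  set (A := Q * Q + D).
  assert (Claim : forall N, (1 <= N)%nat -> forall a, Cmod (Ssum f a N) <= A * Rpower (INR N) g - D).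
  { intros N. induction N as [N IH] using (well_founded_induction lt_wf).
    intros HN a.
    assert (HN1 : 1 <= INR N) by (apply (le_INR 1); lia).
    assert (HR1 : 1 <= Rpower (INR N) g).
    { rewrite <- (Rpower_O (INR N)) by lra. apply Rle_Rpower; lra. }
    destruct (Nat.lt_ge_cases N (q * q)) as [Hs|Hb].
    - assert (Cmod (Ssum f a N) <= INR N) by (apply Ssum_bound; auto).
      assert (INR N <= Q * Q) by (unfold Q; rewrite <- mult_INR; apply le_INR; lia).
      assert (A * 1 <= A * Rpower (INR N) g) by (apply Rmult_le_compat_l; unfold A; nra).
      unfold A in *. lra.
    - set (N2 := (N / q / q)%nat).
      assert (HN2 : N2 = (N / (q * q))%nat) by (unfold N2; rewrite Nat.div_div; lia).
      assert (HN2a : (1 <= N2)%nat) by (rewrite HN2; apply Nat.div_str_pos; lia).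
      assert (HN2b : (N2 < N)%nat) by (rewrite HN2; apply Nat.div_lt; nia).
      assert (HN2c : (q * q * N2 <= N)%nat) by (rewrite HN2; apply Nat.mul_div_le; nia).
      assert (IH2 := IH N2 HN2b HN2a (Q * (Q * a))).
      assert (T := two_step q f M a N Hq Hu Hf HM).
      fold N2 in T. fold Q in T.
      assert (HZ := Cmod_ge_0 (Ssum f (Q * (Q * a)) N2)).
      assert (M * Cmod (Ssum f (Q * (Q * a)) N2) <= M' * Cmod (Ssum f (Q * (Q * a)) N2))
        by (apply Rmult_le_compat_r; lra).
      assert (M' * Cmod (Ssum f (Q * (Q * a)) N2) <= M' * (A * Rpower (INR N2) g - D))
        by (apply Rmult_le_compat_l; lra).
      assert (HP : M' * Rpower (INR N2) g <= Rpower (INR N) g).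
      { rewrite <- HRQ, Rpower_mult_distr by (try apply (lt_INR 0); lia || nra).
        apply Rle_Rpower_l; auto. split.
        - assert (0 < INR N2) by (apply (lt_INR 0); lia). nra.
        - unfold Q. rewrite <- !mult_INR. apply le_INR. auto. }
      assert (0 <= A) by (unfold A; nra).
      assert (A * (M' * Rpower (INR N2) g) <= A * Rpower (INR N) g)
        by (apply Rmult_le_compat_l; auto).
      unfold c in HD. nra. }
  exists g. split; auto. exists A. intros N HN alpha.
  specialize (Claim N HN alpha). unfold Ssum in Claim. lra.
Qed.
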